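(* Let $n\ge1$ be an integer. For each $k\in[n]$ let $G_k$ be a graph with perfect state transfer from vertex $a_k$ to vertex $b_k$ at a common time $t$ (when $a_k=b_k$ this means $G_k$ is periodic at $a_k$ at time $t>0$), where $a_k\neq b_k$ for at least one $k$. For each $k$, let $\pi_k$ be an equitable partition of $G_k$ in which $a_k$ and $b_k$ lie in singleton cells, with normalized partition matrix $Q_k$. Let $\pi$ be the equitable partition of $\square_{k}G_k$ with normalized partition matrix $\bigotimes_k Q_k$. Then \[ \square_{k=1}^n (G_k/\pi_k)\;\cong\;\Big(\square_{k=1}^n G_k\Big)/\pi, \] and this graph has perfect state transfer between (the cells of) $(a_1,\dots,a_n)$ and $(b_1,\dots,b_n)$ at time $t$.
   Context: Graphs are finite and undirected with adjacency matrix $A$; a graph has perfect state transfer from $u$ to $v$ at time $t$ if $|\langle v|e^{-itA}|u\rangle|=1$, where $|u\rangle$ is the standard basis vector of $u$; it is periodic at $u$ if this holds with $v=u$ for some $t>0$. The Cartesian product has adjacency matrix $A(G)\otimes I+I\otimes A(H)$. A partition $V_1\uplus\cdots\uplus V_m$ is equitable if each vertex of $V_j$ has a constant number $d_{j,k}$ of neighbours in $V_k$; the normalized partition matrix is $Q_{x,j}=|V_j|^{-1/2}[x\in V_j]$; the quotient $G/\pi$ is the weighted graph on the cells with adjacency matrix $Q^TA(G)Q$ (entries $\sqrt{d_{j,k}d_{k,j}}$). *)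

(* Defs.v *)
From HB Require Import structures.
From mathcomp Require Import all_boot all_order all_algebra.
From mathcomp Require Import all_classical all_reals.
From mathcomp Require Import topology normedtype sequences.
From mathcomp Require Import complex.
Set Implicit Arguments. Unset Strict Implicit. Unset Printing Implicit Defensive.
Import Order.TTheory GRing.Theory Num.Theory.
Import numFieldTopology.Exports numFieldNormedType.Exports.
Local Open Scope ring_scope.

Definition mat (R : realType) (T : finType) := T -> T -> R.

Section Defs.
Variable R : realType.

Definition mmul (T : finType) (A B : mat R T) : mat R T :=
  fun x y => \sum_(z : T) A x z * B z y.
Definition mid (T : finType) : mat R T := fun x y => (x == y)%:R.
Definition mpow (T : finType) (A : mat R T) (j : nat) : mat R T :=
  iter j (mmul A) (@mid T).

Definition exp_term (T : finType) (A : mat R T) (t : R) (v u : T) (j : nat)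
  : R[i] :=
  (((- 'i * t%:C) ^+ j / (j`!)%:R) * (mpow A j v u)%:C)%C.

(* <v| e^{-itA} |u> : the complex series, summed componentwise *)
Definition exp_entry (T : finType) (A : mat R T) (t : R) (v u : T) : R[i] :=
  Complex (limn (series (fun j => complex.Re (exp_term A t v u j))))
          (limn (series (fun j => complex.Im (exp_term A t v u j)))).

Definition pst (T : finType) (A : mat R T) (u v : T) (t : R) : Prop :=
  `| exp_entry A t v u | = 1.

Definition adjmx (T : finType) (e : rel T) : mat R T := fun x y => (e x y)%:R.

Definition simple_graph (T : finType) (e : rel T) : Prop :=
  symmetric e /\ irreflexive e.

(* A partition of the vertex set T into the cells of C, given by the map
   [cell] (each vertex goes to its cell; cells nonempty = surjective). *)
Definition is_partition (T C : finType) (cell : T -> C) : Prop :=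
  forall c : C, exists x : T, cell x = c.

Definition equitable (T C : finType) (A : mat R T) (cell : T -> C) : Prop :=
  is_partition cell /\
  forall (j k : C) (x y : T), cell x = j -> cell y = j ->
    \sum_(z | cell z == k) A x z = \sum_(z | cell z == k) A y z.

Definition Qmat (T C : finType) (cell : T -> C) (x : T) (j : C) : R :=
  (Num.sqrt (#|[set z | cell z == j]|%:R))^-1 * (cell x == j)%:R.

Definition quotient (T C : finType) (A : mat R T) (cell : T -> C) : mat R C :=
  fun j k => \sum_(x : T) \sum_(y : T) Qmat cell x j * A x y * Qmat cell y k.

(* Cartesian product of n weighted graphs (vertex set the product type):
   adjacency matrix sum_k I (x) .. (x) A_k (x) .. (x) I *)
Definition cartprod (n : nat) (V : 'I_n -> finType) (A : forall k, mat R (V k))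
  : mat R {dffun forall k : 'I_n, V k} :=
  fun x y => \sum_(k < n) A k (x k) (y k) *
               \prod_(l < n | l != k) (x l == y l)%:R.

Definition prodcell (n : nat) (V C : 'I_n -> finType)
  (cell : forall k, V k -> C k) (x : {dffun forall k : 'I_n, V k})
  : {dffun forall k : 'I_n, C k} :=
  [ffun k => cell k (x k)].

Definition wiso (T1 T2 : finType) (A1 : mat R T1) (A2 : mat R T2) : Prop :=
  exists f : T1 -> T2, bijective f /\ forall x y, A2 (f x) (f y) = A1 x y.

End Defs.

(* Main.v *)
Require Import Defs.
From HB Require Import structures.
From mathcomp Require Import all_boot all_order all_algebra.
From mathcomp Require Import all_classical all_reals.
From mathcomp Require Import topology normedtype sequences.
From mathcomp Require Import complex exp derive realfun.
From mathcomp Require Import ring lra.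
Import Order.TTheory GRing.Theory Num.Theory.
Import numFieldTopology.Exports numFieldNormedType.Exports.
Local Open Scope ring_scope.
Set Implicit Arguments. Unset Strict Implicit.

Section Analytic.
Local Open Scope classical_set_scope.
Variable R : realType.
Local Notation C := R[i].

Lemma ReMi (z : C) : complex.Re (z * - 'i%C) = complex.Im z.
Proof. by case: z => a b; simpc. Qed.
Lemma ImMi (z : C) : complex.Im (z * - 'i%C) = - complex.Re z.
Proof. by case: z => a b; simpc. Qed.
Lemma ReMr (z : C) (r : R) : complex.Re (z * (r%:C)%C) = complex.Re z * r.
Proof. by case: z => a b; simpc. Qed.
Lemma ImMr (z : C) (r : R) : complex.Im (z * (r%:C)%C) = complex.Im z * r.
Proof. by case: z => a b; simpc. Qed.
Lemma ReMl (z : C) (r : R) : complex.Re ((r%:C)%C * z) = r * complex.Re z.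
Proof. by rewrite mulrC ReMr mulrC. Qed.
Lemma ImMl (z : C) (r : R) : complex.Im ((r%:C)%C * z) = r * complex.Im z.
Proof. by rewrite mulrC ImMr mulrC. Qed.

Lemma ReIm_bound j : `|complex.Re ((- 'i : C) ^+ j)| <= 1 /\ `|complex.Im ((- 'i : C) ^+ j)| <= 1.
Proof.
elim: j => [|j [h1 h2]]; first by rewrite expr0 /= normr0 normr1.
by rewrite exprSr ReMi ImMi normrN.
Qed.

Section Coef.
Variables (T : finType) (A : mat R T).

Definition cRe (v u : T) (j : nat) : R :=
  complex.Re ((- 'i : C) ^+ j) * (j`!%:R)^-1 * mpow A j v u.
Definition cIm (v u : T) (j : nat) : R :=
  complex.Im ((- 'i : C) ^+ j) * (j`!%:R)^-1 * mpow A j v u.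

Lemma exp_termE t v u j : exp_term A t v u j =
  ((- 'i : C) ^+ j) * ((t ^+ j * (j`!%:R)^-1 * mpow A j v u)%:C)%C.
Proof.
rewrite /exp_term exprMn -!mulrA; congr (_ * _).
by rewrite !rmorphM /= rmorphXn /= fmorphV /= rmorph_nat.
Qed.

Lemma exp_entryE t v u : exp_entry A t v u =
  Complex (limn (pseries (cRe v u) t)) (limn (pseries (cIm v u) t)).
Proof.
rewrite /exp_entry /pseries.
have -> : (fun j => complex.Re (exp_term A t v u j)) = (fun j => cRe v u j * t ^+ j).
  by apply/funext => j; rewrite exp_termE ReMr /cRe; ring.
have -> : (fun j => complex.Im (exp_term A t v u j)) = (fun j => cIm v u j * t ^+ j).
  by apply/funext => j; rewrite exp_termE ImMr /cIm; ring.
by [].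
Qed.

Definition Lb : R := \sum_x \sum_y `|A x y|.

Lemma Lb_ge0 : 0 <= Lb.
Proof. by apply: sumr_ge0 => x _; apply: sumr_ge0 => y _; exact: normr_ge0. Qed.

Lemma row_le_Lb v : \sum_z `|A v z| <= Lb.
Proof.
rewrite /Lb [leRHS](bigD1 v) //= lerDl; apply: sumr_ge0 => x _; apply: sumr_ge0 => y _; exact: normr_ge0.
Qed.

Lemma mpow_bound j v u : `|mpow A j v u| <= Lb ^+ j.
Proof.
elim: j v u => [|j IH] v u.
  by rewrite /= /mid expr0; case: (v == u); rewrite ?normr1 ?normr0.
rewrite [mpow _ _]/= -/(mpow A j) /mmul exprS.
apply: (le_trans (ler_norm_sum _ _ _)).
apply: (@le_trans _ _ (\sum_z `|A v z| * Lb ^+ j)).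
  apply: ler_sum => z _; rewrite normrM; apply: ler_wpM2l => //.
rewrite -mulr_suml; apply: ler_wpM2r; first by apply: exprn_ge0; apply: Lb_ge0.
exact: row_le_Lb.
Qed.

Lemma coef_bound (c : nat -> R) (x : R) :
  (forall j, `|c j| <= Lb ^+ j / j`!%:R) -> cvgn (pseries c x).
Proof.
move=> hc; apply: normed_cvg.
apply: (@series_le_cvg _ _ (exp_coeff (Lb * `|x|))).
- by move=> n; exact: normr_ge0.
- by move=> n; apply: exp_coeff_ge0; apply: mulr_ge0 => //; apply: Lb_ge0.
- move=> n; rewrite /exp_coeff /= normrM normrX exprMn mulrAC.
  apply: ler_wpM2r; first by apply: exprn_ge0.
  exact: hc.
- exact: is_cvg_series_exp_coeff.
Qed.

Lemma coef_bound2 (z : C) j v u : `|complex.Re z| <= 1 ->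
  `|complex.Re z * (j`!%:R)^-1 * mpow A j v u| <= Lb ^+ j / j`!%:R.
Proof.
move=> hz; rewrite normrM normrM [`|(j`!%:R)^-1|]ger0_norm ?invr_ge0 //.
rewrite mulrAC; apply: ler_wpM2r; first by rewrite invr_ge0.
rewrite -[leRHS]mul1r; apply: ler_pM => //; exact: mpow_bound.
Qed.

Lemma cvg_cRe v u x : cvgn (pseries (cRe v u) x).
Proof. by apply: coef_bound => j; apply: coef_bound2; case: (ReIm_bound j). Qed.

Lemma cvg_cIm v u x : cvgn (pseries (cIm v u) x).
Proof.
apply: coef_bound => j; rewrite /cIm.
have -> : complex.Im ((- 'i : C) ^+ j) = complex.Re ((complex.Im ((- 'i : C) ^+ j))%:C)%C by [].
by apply: coef_bound2; case: (ReIm_bound j).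
Qed.

Lemma diffs_cRe v u :
  pseries_diffs (cRe v u) = fun j => \sum_w A v w * cIm w u j.
Proof.
apply/funext => j; rewrite /pseries_diffs /cRe /cIm exprSr ReMi.
rewrite [mpow _ _.+1]/= -/(mpow A j) /mmul factS natrM mulr_sumr mulr_sumr.
apply: eq_bigr => w _.
have h : (j.+1%:R : R) != 0 by rewrite pnatr_eq0.
have h2 : (j`!%:R : R) != 0 by rewrite pnatr_eq0 -lt0n fact_gt0.
field; by rewrite h2 nat1r h.
Qed.

Lemma diffs_cIm v u :
  pseries_diffs (cIm v u) = fun j => \sum_w (- A v w) * cRe w u j.
Proof.
apply/funext => j; rewrite /pseries_diffs /cRe /cIm exprSr ImMi.
rewrite [mpow _ _.+1]/= -/(mpow A j) /mmul factS natrM mulr_sumr mulr_sumr.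
apply: eq_bigr => w _.
have h : (j.+1%:R : R) != 0 by rewrite pnatr_eq0.
have h2 : (j`!%:R : R) != 0 by rewrite pnatr_eq0 -lt0n fact_gt0.
field; by rewrite h2 nat1r h.
Qed.

End Coef.

Lemma pseries_linE (I : finType) (a : I -> R) (c : I -> nat -> R) x :
  pseries (fun j => \sum_i a i * c i j) x =
  (fun n => \sum_i a i * pseries (c i) x n).
Proof.
apply/funext => n; rewrite /pseries /series /=.
under eq_bigr do rewrite mulr_suml.
rewrite exchange_big /=; apply: eq_bigr => i _.
by rewrite mulr_sumr; apply: eq_bigr => j _; rewrite mulrA.
Qed.

Lemma pseries_lin (I : finType) (a : I -> R) (c : I -> nat -> R) x :
  (forall i, cvgn (pseries (c i) x)) ->
  pseries (fun j => \sum_i a i * c i j) x @ \oo -->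
    \sum_i a i * limn (pseries (c i) x).
Proof.
move=> hc; rewrite pseries_linE.
apply: cvg_big.
- exact: add_continuous.
- by move=> i _; apply: cvgMr; exact: hc.
Qed.

Lemma pseries_lin_cvg (I : finType) (a : I -> R) (c : I -> nat -> R) x :
  (forall i, cvgn (pseries (c i) x)) ->
  cvgn (pseries (fun j => \sum_i a i * c i j) x).
Proof. by move=> hc; apply/cvg_ex; eexists; apply: pseries_lin. Qed.

Lemma pseries_lin_lim (I : finType) (a : I -> R) (c : I -> nat -> R) x :
  (forall i, cvgn (pseries (c i) x)) ->
  limn (pseries (fun j => \sum_i a i * c i j) x) =
    \sum_i a i * limn (pseries (c i) x).
Proof. by move=> hc; apply: cvg_lim => //; apply: pseries_lin. Qed.

Lemma diffs_lin (I : finType) (a : I -> R) (c : I -> nat -> R) :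
  pseries_diffs (fun j => \sum_i a i * c i j) =
  (fun j => \sum_i a i * pseries_diffs (c i) j).
Proof.
apply/funext => j; rewrite /pseries_diffs mulr_sumr; apply: eq_bigr => i _.
by rewrite mulrCA.
Qed.



Section Deriv.
Variables (T : finType) (A : mat R T) (u : T).

Lemma cvg_diffs_Re v x : cvgn (pseries (pseries_diffs (cRe A v u)) x).
Proof. by rewrite diffs_cRe; apply: pseries_lin_cvg => w; exact: cvg_cIm. Qed.
Lemma cvg_diffs_Im v x : cvgn (pseries (pseries_diffs (cIm A v u)) x).
Proof. by rewrite diffs_cIm; apply: pseries_lin_cvg => w; exact: cvg_cRe. Qed.

Lemma deriv_Re v t : is_derive t (1 : R) (fun s => limn (pseries (cRe A v u) s))
   (\sum_w A v w * limn (pseries (cIm A w u) t)).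
Proof.
have Kt : `|t| < Num.norm (`|t| + 1).
  by rewrite [Num.norm (_ + 1)]ger0_norm ?ltrDl //; apply: addr_ge0.
have := pseries_snd_diffs (c := cRe A v u) (K := `|t| + 1) (@cvg_cRe T A v u _) (@cvg_diffs_Re v _) _ Kt.
rewrite diffs_cRe pseries_lin_lim; last by move=> w; exact: cvg_cIm.
apply; rewrite diffs_lin; apply: pseries_lin_cvg => w; exact: cvg_diffs_Im.
Qed.

Lemma deriv_Im v t : is_derive t (1 : R) (fun s => limn (pseries (cIm A v u) s))
   (\sum_w (- A v w) * limn (pseries (cRe A w u) t)).
Proof.
have Kt : `|t| < Num.norm (`|t| + 1).
  by rewrite [Num.norm (_ + 1)]ger0_norm ?ltrDl //; apply: addr_ge0.
have := pseries_snd_diffs (c := cIm A v u) (K := `|t| + 1) (@cvg_cIm T A v u _) (@cvg_diffs_Im v _) _ Kt.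
rewrite diffs_cIm pseries_lin_lim; last by move=> w; exact: cvg_cRe.
apply; rewrite diffs_lin; apply: pseries_lin_cvg => w; exact: cvg_diffs_Re.
Qed.

Lemma pseries_at0 (c : nat -> R) : limn (pseries c 0) = c 0%N.
Proof.
apply: cvg_lim => //; rewrite -cvg_shiftS /=.
have -> : (fun n => pseries c 0 n.+1) = (fun=> c 0%N).
  apply/funext => n; rewrite /pseries /series /= big_nat_recl //= expr0 mulr1.
  by rewrite big1 ?addr0 // => i _; rewrite expr0n /= mulr0.
exact: cvg_cst.
Qed.

End Deriv.

Lemma ReD (x y : C) : complex.Re (x + y) = complex.Re x + complex.Re y.
Proof. by case: x; case: y. Qed.
Lemma ImD (x y : C) : complex.Im (x + y) = complex.Im x + complex.Im y.
Proof. by case: x; case: y. Qed.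
Lemma Re_sum (I : finType) (f : I -> C) :
  complex.Re (\sum_i f i) = \sum_i complex.Re (f i).
Proof. by elim/big_rec2: _ => // i x y _ <-; rewrite ReD. Qed.
Lemma Im_sum (I : finType) (f : I -> C) :
  complex.Im (\sum_i f i) = \sum_i complex.Im (f i).
Proof. by elim/big_rec2: _ => // i x y _ <-; rewrite ImD. Qed.
Lemma ReNi (z : C) : complex.Re (- 'i%C * z) = complex.Im z.
Proof. by rewrite mulrC ReMi. Qed.
Lemma ImNi (z : C) : complex.Im (- 'i%C * z) = - complex.Re z.
Proof. by rewrite mulrC ImMi. Qed.

Definition cderiv (F : R -> C) (s : R) (d : C) :=
  is_derive s (1 : R) (fun t => complex.Re (F t)) (complex.Re d) /\
  is_derive s (1 : R) (fun t => complex.Im (F t)) (complex.Im d).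

Lemma cderiv_exp (T : finType) (A : mat R T) u v s :
  cderiv (fun t => exp_entry A t v u) s
    (- 'i%C * \sum_w ((A v w)%:C)%C * exp_entry A s w u).
Proof.
rewrite /cderiv ReNi ImNi Re_sum Im_sum.
have -> : (fun t => complex.Re (exp_entry A t v u)) =
          (fun t => limn (pseries (cRe A v u) t)).
  by apply/funext => t; rewrite exp_entryE.
have -> : (fun t => complex.Im (exp_entry A t v u)) =
          (fun t => limn (pseries (cIm A v u) t)).
  by apply/funext => t; rewrite exp_entryE.
split.
  apply: is_derive_eq; first exact: deriv_Re.
  by apply: eq_bigr => w _; rewrite ImMl exp_entryE.
apply: is_derive_eq; first exact: deriv_Im.
rewrite -sumrN; apply: eq_bigr => w _; rewrite ReMl exp_entryE /=; ring.
Qed.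

Lemma exp_entry0 (T : finType) (A : mat R T) v u :
  exp_entry A 0 v u = (((v == u)%:R : R)%:C)%C.
Proof.
rewrite exp_entryE !pseries_at0 /cRe /cIm /= /mid.
by rewrite invr1 !mulr1 !mul1r mul0r.
Qed.


Section DerivR.
Implicit Types (f g : R -> R).
Lemma isdM f g s df dg : is_derive s (1:R) f df -> is_derive s (1:R) g dg ->
  is_derive s (1:R) (fun t => f t * g t) (f s * dg + g s * df).
Proof. by move=> h1 h2; have := is_deriveM h1 h2. Qed.
Lemma isdD f g s df dg : is_derive s (1:R) f df -> is_derive s (1:R) g dg ->
  is_derive s (1:R) (fun t => f t + g t) (df + dg).
Proof. by move=> h1 h2; have := is_deriveD h1 h2. Qed.
Lemma isdB f g s df dg : is_derive s (1:R) f df -> is_derive s (1:R) g dg ->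
  is_derive s (1:R) (fun t => f t - g t) (df - dg).
Proof. by move=> h1 h2; have := is_deriveB h1 h2. Qed.
Lemma isd_sum (I : finType) (h : I -> R -> R) dh s :
  (forall i, is_derive s (1:R) (h i) (dh i)) ->
  is_derive s (1:R) (fun t => \sum_i h i t) (\sum_i dh i).
Proof.
move=> hd.
have -> : (fun t => \sum_i h i t) = \sum_i h i.
  by apply/funext => t; rewrite fct_sumE.
elim/big_ind2: _ => //.
- exact: is_derive_cst.
- by move=> f1 d1 f2 d2 h1 h2; apply: is_deriveD.
Qed.
End DerivR.


Lemma mul_self_ge0 (x : R) : 0 <= x * x.
Proof. exact: sqr_ge0. Qed.

Lemma ode_uniq (T : finType) (B : mat R T) (hsym : forall x y, B x y = B y x)
  (P Q : T -> R -> R) :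
  (forall x s, is_derive s (1:R) (P x) (\sum_w B x w * Q w s)) ->
  (forall x s, is_derive s (1:R) (Q x) (- \sum_w B x w * P w s)) ->
  (forall x, P x 0 = 0 /\ Q x 0 = 0) -> forall x t, P x t = 0 /\ Q x t = 0.
Proof.
move=> hP hQ h0 x t.
pose D := fun s => \sum_y (P y s * P y s + Q y s * Q y s).
have hD : forall s, is_derive s (1:R) D 0.
  move=> s; apply: is_derive_eq.
    by apply: isd_sum => y; apply: isdD; apply: isdM.
  have E : \sum_y Q y s * (\sum_w B y w * P w s) =
           \sum_y P y s * (\sum_w B y w * Q w s).
    under eq_bigr do rewrite mulr_sumr.
    rewrite exchange_big /=; apply: eq_bigr => y _; rewrite mulr_sumr.
    by apply: eq_bigr => w _; rewrite hsym; ring.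
  transitivity (\sum_i (2 * (P i s * \sum_w B i w * Q w s)
                        - 2 * (Q i s * \sum_w B i w * P w s))).
    by apply: eq_bigr => i _; rewrite /GRing.scale /=; ring.
  by rewrite sumrB -!mulr_sumr E subrr.
have := @is_derive_0_is_cst _ D t 0 hD.
rewrite /D /=.
have -> : \sum_y (P y 0 * P y 0 + Q y 0 * Q y 0) = 0.
  by apply: big1 => y _; rewrite (proj1 (h0 y)) (proj2 (h0 y)) !mulr0 addr0.
move=> /eqP; rewrite psumr_eq0; last first.
  by move=> y _; apply: addr_ge0; apply: mul_self_ge0.
move=> /allP /(_ x (mem_index_enum x)) /implyP /(_ isT).
rewrite paddr_eq0 ?mul_self_ge0 // !mulf_eq0 !orbb => /andP [/eqP -> /eqP ->].
by [].
Qed.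

Definition solC (T : finType) (B : mat R T) (F : T -> R -> C) :=
  forall x s, cderiv (F x) s (- 'i%C * \sum_w ((B x w)%:C)%C * F w s).

Lemma solC_uniq (T : finType) (B : mat R T) (hsym : forall x y, B x y = B y x)
  (F G : T -> R -> C) : solC B F -> solC B G ->
  (forall x, F x 0 = G x 0) -> forall x t, F x t = G x t.
Proof.
move=> hF hG h0 x t.
pose P := fun y s => complex.Re (F y s) - complex.Re (G y s).
pose Q := fun y s => complex.Im (F y s) - complex.Im (G y s).
have HP : forall y s, is_derive s (1:R) (P y) (\sum_w B y w * Q w s).
  move=> y s; apply: is_derive_eq.
    by apply: isdB; [exact: (proj1 (hF y s)) | exact: (proj1 (hG y s))].
  rewrite !ReNi !Im_sum -sumrB; apply: eq_bigr => w _; rewrite !ImMl /Q; ring.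
have HQ : forall y s, is_derive s (1:R) (Q y) (- \sum_w B y w * P w s).
  move=> y s; apply: is_derive_eq.
    by apply: isdB; [exact: (proj2 (hF y s)) | exact: (proj2 (hG y s))].
  rewrite !ImNi !Re_sum -!sumrN -big_split; apply: eq_bigr => w _ /=.
  rewrite !ReMl /P; ring.
have H0 : forall y, P y 0 = 0 /\ Q y 0 = 0 by move=> y; rewrite /P /Q h0 !subrr.
have [] := @ode_uniq T B hsym P Q HP HQ H0 x t; rewrite /P /Q.
move=> /eqP; rewrite subr_eq0 => /eqP h1 /eqP; rewrite subr_eq0 => /eqP h2.
by apply/eqP; rewrite eq_complex h1 h2 !eqxx.
Qed.

Lemma solC_exp (T : finType) (A : mat R T) u :
  solC A (fun v t => exp_entry A t v u).
Proof. by move=> x s; apply: cderiv_exp. Qed.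


Lemma ReM (x y : C) : complex.Re (x * y) =
  complex.Re x * complex.Re y - complex.Im x * complex.Im y.
Proof. by case: x => a b; case: y => c d. Qed.
Lemma ImM (x y : C) : complex.Im (x * y) =
  complex.Re x * complex.Im y + complex.Im x * complex.Re y.
Proof. by case: x => a b; case: y => c d. Qed.

Lemma cderivM (F G : R -> C) s a b : cderiv F s a -> cderiv G s b ->
  cderiv (fun t => F t * G t) s (a * G s + F s * b).
Proof.
move=> [hF1 hF2] [hG1 hG2]; split.
  have -> : (fun t => complex.Re (F t * G t)) = (fun t =>
     complex.Re (F t) * complex.Re (G t) - complex.Im (F t) * complex.Im (G t)).
    by apply/funext => t; rewrite ReM.
  have h := isdB (isdM hF1 hG1) (isdM hF2 hG2).
  suff -> : complex.Re (a * G s + F s * b) = complex.Re (F s) * complex.Re b + complex.Re (G s) * complex.Re a -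
       (complex.Im (F s) * complex.Im b + complex.Im (G s) * complex.Im a) by exact: h.
  by rewrite ReD !ReM; ring.
have -> : (fun t => complex.Im (F t * G t)) = (fun t =>
   complex.Re (F t) * complex.Im (G t) + complex.Im (F t) * complex.Re (G t)).
  by apply/funext => t; rewrite ImM.
have h := isdD (isdM hF1 hG2) (isdM hF2 hG1).
suff -> : complex.Im (a * G s + F s * b) = complex.Re (F s) * complex.Im b + complex.Im (G s) * complex.Re a +
   (complex.Im (F s) * complex.Re b + complex.Re (G s) * complex.Im a) by exact: h.
by rewrite ImD !ImM; ring.
Qed.

Lemma cderiv_cst (c : C) s : cderiv (fun=> c) s 0.
Proof. by split; apply: is_derive_cst. Qed.

Lemma cderiv_prod_seq (I : eqType) (r : seq I) (F : I -> R -> C) d s :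
  uniq r -> (forall i, cderiv (F i) s (d i)) ->
  cderiv (fun t => \prod_(i <- r) F i t) s
    (\sum_(i <- r) d i * \prod_(j <- r | j != i) F j s).
Proof.
move=> ur hd; elim: r ur => [|a r IH] /=.
  move=> _; rewrite big_nil.
  have -> : (fun t => \prod_(i <- [::]) F i t) = (fun=> 1) by apply/funext => t; rewrite big_nil.
  exact: cderiv_cst.
move=> /andP [anr ur].
have -> : (fun t => \prod_(i <- a :: r) F i t) = (fun t => F a t * \prod_(i <- r) F i t).
  by apply/funext => t; rewrite big_cons.
have := cderivM (hd a) (IH ur).
suff -> : \sum_(i <- a :: r) d i * \prod_(j <- a :: r | j != i) F j s =
  d a * \prod_(i <- r) F i s + F a s * (\sum_(i <- r) d i * \prod_(j <- r | j != i) F j s) by [].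
rewrite big_cons big_cons eqxx /=; congr (_ + _).
  congr (_ * _); rewrite big_seq_cond [RHS]big_seq_cond; apply: eq_bigl => j.
  by case jr: (j \in r) => //=; apply/negP => /eqP ja; move: anr; rewrite -ja jr.
rewrite mulr_sumr; apply: eq_big_seq => i ir.
rewrite big_cons; case: eqP => [ai|_]; first by move: anr; rewrite ai ir.
by rewrite mulrCA.
Qed.

Lemma cderiv_prod (I : finType) (F : I -> R -> C) d s :
  (forall i, cderiv (F i) s (d i)) ->
  cderiv (fun t => \prod_i F i t) s (\sum_i d i * \prod_(j | j != i) F j s).
Proof. by move=> hd; apply: cderiv_prod_seq => //; exact: index_enum_uniq. Qed.

End Analytic.

From HB Require Import structures.
From mathcomp Require Import all_boot all_order all_algebra.
From mathcomp Require Import all_classical all_reals.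
From mathcomp Require Import topology normedtype sequences.
From mathcomp Require Import complex exp derive realfun.
From mathcomp Require Import ring lra.
Import Order.TTheory GRing.Theory Num.Theory.
Import numFieldTopology.Exports numFieldNormedType.Exports.
Local Open Scope ring_scope.
Set Implicit Arguments. Unset Strict Implicit.

Section Quot.
Variables (R : realType) (T C : finType) (A : mat R T) (cell : T -> C).
Hypothesis heq : equitable A cell.

Definition deg x c := \sum_(z | cell z == c) A x z.
Definition sq c : R := Num.sqrt (#|[set z | cell z == c]|%:R).

Lemma card_gt0 c : (0 < #|[set z | cell z == c]|)%N.
Proof.
have [z hz] := (proj1 heq) c; apply/card_gt0P; by exists z; rewrite inE hz.
Qed.

Lemma sq_gt0 c : 0 < sq c.
Proof. by rewrite sqrtr_gt0 ltr0n card_gt0. Qed.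

Lemma sq_neq0 c : sq c != 0.
Proof. by rewrite gt_eqF // sq_gt0. Qed.

Lemma sq_sqr c : sq c * sq c = #|[set z | cell z == c]|%:R.
Proof. by rewrite -expr2 sqr_sqrtr // ler0n. Qed.

Lemma QmatE x c : Qmat R cell x c = (sq c)^-1 * (cell x == c)%:R.
Proof. by []. Qed.

Lemma sum_partition (F : T -> R) :
  \sum_w F w = \sum_c \sum_(w | cell w == c) F w.
Proof. by rewrite (partition_big cell xpredT). Qed.

Lemma quot_formula j k x0 : cell x0 = j ->
  quotient A cell j k = #|[set z | cell z == j]|%:R * deg x0 k / (sq j * sq k).
Proof.
move=> hx0; rewrite /quotient.
have -> : \sum_x \sum_y Qmat R cell x j * A x y * Qmat R cell y k =
  \sum_(x | cell x == j) (sq j)^-1 * (sq k)^-1 * deg x k.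
  rewrite (bigID (fun x => cell x == j)) /= [X in _ + X]big1 ?addr0; last first.
    by move=> x /negbTE hx; apply: big1 => y _; rewrite QmatE hx !mulr0 !mul0r.
  apply: eq_bigr => x hx; rewrite /deg mulr_sumr.
  rewrite (bigID (fun y => cell y == k)) /= [X in _ + X]big1 ?addr0; last first.
    by move=> y /negbTE hy; rewrite !QmatE hy !mulr0.
  by apply: eq_bigr => y hy; rewrite !QmatE hx hy /= !mulr1 mulrAC.
have -> : \sum_(x | cell x == j) (sq j)^-1 * (sq k)^-1 * deg x k =
   \sum_(x | cell x == j) (sq j)^-1 * (sq k)^-1 * deg x0 k.
  apply: eq_bigr => x /eqP hx; congr (_ * _).
  by apply: (proj2 heq j k x x0 hx hx0).
rewrite sumr_const -hx0.
rewrite (eq_card (B := [set z | cell z == cell x0])); last by move=> z; rewrite inE.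
rewrite -mulr_natl; field.
by rewrite !sq_neq0.
Qed.


Lemma sum_mid (F : T -> R) x : \sum_z mid R x z * F z = F x.
Proof.
rewrite (bigD1 x) //= big1 ?addr0 /mid ?eqxx ?mul1r // => z hz.
by rewrite eq_sym (negbTE hz) mul0r.
Qed.

Lemma AQ x (F : C -> R) :
  \sum_w A x w * ((sq (cell w))^-1 * F (cell w)) =
  \sum_c deg x c * ((sq c)^-1 * F c).
Proof.
rewrite sum_partition; apply: eq_bigr => c _; rewrite /deg mulr_suml.
by apply: eq_bigr => w /eqP ->.
Qed.

Lemma mpow_Q j x d : \sum_z mpow A j x z * Qmat R cell z d =
  Qmat R cell x (cell x) * mpow (quotient A cell) j (cell x) d.
Proof.
elim: j x => [|j IH] x.
  rewrite /= sum_mid /mid !QmatE eqxx.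
  case: (cell x =P d) => [->|hne].
    by rewrite !mulr1.
  by rewrite !mulr0.
rewrite [mpow A _]/= -/(mpow A j) /mmul.
under eq_bigr do rewrite mulr_suml.
rewrite exchange_big /=.
under eq_bigr => w _ do under eq_bigr => z _ do rewrite -mulrA.
under eq_bigr => w _ do rewrite -mulr_sumr IH QmatE eqxx mulr1.

rewrite (AQ x (fun c => mpow (quotient A cell) j c d)) [mpow (quotient A cell) _]/= -/(mpow (quotient A cell) j) /mmul.
rewrite QmatE eqxx mulr1 mulr_sumr; apply: eq_bigr => c _.
rewrite (quot_formula _ (erefl (cell x))) -sq_sqr.
field; by rewrite !sq_neq0.
Qed.

Lemma Qmat_single u : (forall z, cell z = cell u -> z = u) ->
  forall z, Qmat R cell z (cell u) = (z == u)%:R.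
Proof.
move=> hs z; rewrite QmatE /sq.
have -> : [set z | cell z == cell u] = [set u].
  by apply/setP => y; rewrite !inE; apply/eqP/eqP => [/hs|->].
rewrite cards1 sqrtr1 invr1 mul1r.
by case: (z =P u) => [->|hne]; rewrite ?eqxx // (introF eqP) // => /hs.
Qed.

Lemma mpow_single j u v : (forall z, cell z = cell u -> z = u) ->
  (forall z, cell z = cell v -> z = v) ->
  mpow (quotient A cell) j (cell v) (cell u) = mpow A j v u.
Proof.
move=> hu hv; have := mpow_Q j v (cell u).
rewrite Qmat_single // eqxx mul1r => <-.
rewrite (bigD1 u) //= Qmat_single // eqxx mulr1 big1 ?addr0 // => z hz.
by rewrite Qmat_single // (negbTE hz) mulr0.
Qed.

Lemma exp_entry_single t u v : (forall z, cell z = cell u -> z = u) ->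
  (forall z, cell z = cell v -> z = v) ->
  exp_entry (quotient A cell) t (cell v) (cell u) = exp_entry A t v u.
Proof.
move=> hu hv; rewrite !exp_entryE.
have -> : cRe (quotient A cell) (cell v) (cell u) = cRe A v u.
  by apply/funext => j; rewrite /cRe mpow_single.
have -> : cIm (quotient A cell) (cell v) (cell u) = cIm A v u.
  by apply/funext => j; rewrite /cIm mpow_single.
by [].
Qed.

End Quot.

From HB Require Import structures.
From mathcomp Require Import all_boot all_order all_algebra.
From mathcomp Require Import all_classical all_reals.
From mathcomp Require Import topology normedtype sequences.
From mathcomp Require Import complex exp derive realfun.
From mathcomp Require Import ring lra.
Import Order.TTheory GRing.Theory Num.Theory.
Import numFieldTopology.Exports numFieldNormedType.Exports.
Local Open Scope ring_scope.
Set Implicit Arguments. Unset Strict Implicit.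

Section Upd.
Variables (n : nat) (V : 'I_n -> finType).
Local Notation DT := {dffun forall k : 'I_n, V k}.

Definition upd (x : DT) (k : 'I_n) (w : V k) : DT := finfun (dfwith (fun l => x l) k w).

Arguments upd : clear implicits.
Lemma upd_k (x : DT) k (w : V k) : upd x k w k = w.
Proof. rewrite /upd ffunE; exact: dfwith_in. Qed.

Lemma upd_l (x : DT) k (w : V k) l : l != k -> upd x k w l = x l.
Proof. move=> hl; rewrite /upd ffunE; apply: dfwith_out; by rewrite eq_sym. Qed.

Lemma sum_upd (S : comNzRingType) (F : DT -> S) (x : DT) k (g : V k -> S) :
  \sum_(y : DT) (g (y k) * \prod_(l | l != k) ((x l == y l)%:R : S)) * F y =
  \sum_w g w * F (upd x k w).
Proof.
rewrite (partition_big (fun y : DT => y k) xpredT) //=.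
apply: eq_bigr => w _.
rewrite (bigD1 (upd x k w)) /=; last by rewrite upd_k eqxx.
rewrite upd_k big1 ?mulr1; last by move=> l hl; rewrite upd_l // eqxx.
rewrite big1 ?addr0 // => y /andP [/eqP hyk hy].
case: (pickP (fun l => y l != upd x k w l)) => [l hl|hnone]; last first.
  case/eqP: hy; apply/ffunP => l; by move/negbFE/eqP: (hnone l).
have lk : l != k.
  apply/negP => /eqP e; move: hl; rewrite /=. subst l; by rewrite upd_k hyk eqxx.
have hxy : (x l == y l) = false.
  by apply/negbTE; rewrite -(@upd_l x k w l lk) eq_sym.
by rewrite (bigD1 l) //= hxy mul0r mulr0 mul0r.
Qed.

End Upd.
Arguments upd {n V} x k w.

Unset Implicit Arguments.
Section Prod.
Variables (R : realType) (n : nat) (V : 'I_n -> finType) (A : forall k, mat R (V k)).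
Local Notation DT := {dffun forall k : 'I_n, V k}.
Local Notation AG := (cartprod A).
Local Notation C := R[i].

Lemma AG_sum (F : DT -> R) (x : DT) :
  \sum_y AG x y * F y = \sum_(k : 'I_n) \sum_(w : V k) A k (x k) w * F (upd x k w).
Proof.
rewrite /cartprod; under eq_bigr do rewrite mulr_suml.
by rewrite exchange_big; apply: eq_bigr => k _; apply: sum_upd.
Qed.

Lemma AG_sumC (F : DT -> C) (x : DT) :
  \sum_y ((AG x y)%:C)%C * F y = \sum_(k : 'I_n) \sum_(w : V k) ((A k (x k) w)%:C)%C * F (upd x k w).
Proof.
rewrite /cartprod.
under eq_bigr do rewrite rmorph_sum mulr_suml.
rewrite exchange_big; apply: eq_bigr => k _.
rewrite -(sum_upd F x (fun w => ((A k (x k) w)%:C)%C)).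
apply: eq_bigr => y _; rewrite rmorphM rmorph_prod /=.
by under eq_bigr do rewrite rmorph_nat.
Qed.

Hypothesis hsym : forall k x y, A k x y = A k y x.

Lemma AG_sym x y : AG x y = AG y x.
Proof.
rewrite /cartprod; apply: eq_bigr => k _; rewrite hsym; congr (_ * _).
by apply: eq_bigr => l _; rewrite eq_sym.
Qed.

Variable a : forall k, V k.

Lemma exp_prod x t : exp_entry AG t x (finfun a) =
  \prod_k exp_entry (A k) t (x k) (a k).
Proof.
apply: (@solC_uniq R DT AG AG_sym
  (fun x t => exp_entry AG t x (finfun a))
  (fun x t => \prod_k exp_entry (A k) t (x k) (a k))).
- exact: solC_exp.
- move=> y s.
  have := @cderiv_prod R 'I_n (fun k t => exp_entry (A k) t (y k) (a k)) _ s
    (fun k => cderiv_exp (A k) (a k) (y k) s).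
  suff -> : - 'i%C * \sum_w ((AG y w)%:C)%C * \prod_k exp_entry (A k) s (w k) (a k) =
    \sum_k (- 'i%C * \sum_w ((A k (y k) w)%:C)%C * exp_entry (A k) s w (a k)) *
       \prod_(j | j != k) exp_entry (A j) s (y j) (a j) by [].
  rewrite (AG_sumC (fun w => \prod_k exp_entry (A k) s (w k) (a k))) mulr_sumr.
  apply: eq_bigr => k _; rewrite -mulrA mulr_suml; congr (_ * _).
  apply: eq_bigr => w _; rewrite -mulrA; congr (_ * _).
  rewrite (bigD1 k) //= upd_k; congr (_ * _).
  by apply: eq_bigr => l hl; rewrite upd_l.
- move=> y; rewrite exp_entry0.
  case: (y =P finfun a) => [->|hne].
    rewrite big1 // => k _; by rewrite ffunE exp_entry0 eqxx.
  have [k hk] : exists k, y k != a k.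
    case: (pickP (fun k => y k != a k)) => [k hk|hnone]; first by exists k.
    case: hne; apply/ffunP => k; rewrite ffunE; exact/eqP/negbFE/hnone.
  rewrite (bigD1 k) //= exp_entry0 (negbTE hk) /=.
  by rewrite mul0r.
Qed.

End Prod.

From HB Require Import structures.
From mathcomp Require Import all_boot all_order all_algebra.
From mathcomp Require Import all_classical all_reals.
From mathcomp Require Import topology normedtype sequences.
From mathcomp Require Import complex exp derive realfun.
From mathcomp Require Import ring lra.
Import Order.TTheory GRing.Theory Num.Theory.
Import numFieldTopology.Exports numFieldNormedType.Exports.
Local Open Scope ring_scope.

Section PartProd.
Variables (R : realType) (n : nat) (V C : 'I_n -> finType)
  (A : forall k, mat R (V k)) (cell : forall k, V k -> C k).
Hypothesis heq : forall k, equitable (A k) (cell k).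
Local Notation DT := {dffun forall k : 'I_n, V k}.
Local Notation DC := {dffun forall k : 'I_n, C k}.
Local Notation AG := (cartprod A).
Local Notation pi := (prodcell cell).

Lemma pi_upd_eq (x : DT) k (w : V k) (K : DC) :
  (pi (upd x k w) == K) =
  (cell k w == K k) && [forall l : 'I_n, (l != k) ==> (cell l (x l) == K l)].
Proof.
apply/eqP/andP => [h|[/eqP h1 /forallP h2]].
  split; first by rewrite -h /prodcell ffunE upd_k.
  apply/forallP => l; apply/implyP => hl.
  by rewrite -h /prodcell ffunE upd_l.
apply/ffunP => l; rewrite /prodcell ffunE.
case: (eqVneq l k) => [->|hl]; first by rewrite upd_k.
by rewrite upd_l //; apply/eqP; exact: (implyP (h2 l) hl).
Qed.

Definition degk k (v : V k) (c : C k) := \sum_(w | cell k w == c) A k v w.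

Lemma degG (x : DT) (K : DC) :
  \sum_(z | pi z == K) AG x z =
  \sum_k ([forall l : 'I_n, (l != k) ==> (cell l (x l) == K l)])%:R * degk k (x k) (K k).
Proof.
rewrite big_mkcond.
have -> : \sum_z (if pi z == K then AG x z else 0) =
          \sum_z AG x z * (pi z == K)%:R.
  by apply: eq_bigr => z _; case: (pi z == K); rewrite ?mulr1 ?mulr0.
rewrite (AG_sum R n V A (fun z => (pi z == K)%:R)).
apply: eq_bigr => k _; rewrite /degk [in RHS]big_mkcond [in RHS]mulr_sumr.
apply: eq_bigr => w _; rewrite pi_upd_eq.
by case: (cell k w == K k); case: [forall _, _]; rewrite /= ?mulr0 ?mulr1 ?mul1r ?mul0r.
Qed.

Lemma pi_k (x : DT) k : pi x k = cell k (x k).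
Proof. by rewrite /prodcell ffunE. Qed.

Lemma equit_prod : equitable AG pi.
Proof.
split.
  move=> K.
  have ex : forall k, exists w : V k, cell k w == K k.
    by move=> k; have [w hw] := proj1 (heq k) (K k); exists w; apply/eqP.
  exists (finfun (fun k => xchoose (ex k))).
  by apply/ffunP => k; rewrite pi_k ffunE; exact/eqP/(xchooseP (ex k)).
move=> J K x y hx hy; rewrite !degG; apply: eq_bigr => k _.
have -> : [forall l, (l != k) ==> (cell l (x l) == K l)] =
          [forall l, (l != k) ==> (cell l (y l) == K l)].
  by apply: eq_forallb => l; rewrite -!pi_k hx hy.
congr (_ * _); apply: (proj2 (heq k) (J k)).
  by rewrite -pi_k hx.
by rewrite -pi_k hy.
Qed.


Lemma card_pi (X : DC) : #|[set z : DT | pi z == X]| =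
  (\prod_k #|[set w | cell k w == X k]|)%N.
Proof.
transitivity #|(family (fun k => [pred w | cell k w == X k]) : simpl_pred DT)|.
  apply: eq_card => z; rewrite inE; apply/eqP/familyP => [h k|h].
    by rewrite inE -h pi_k.
  by apply/ffunP => k; rewrite pi_k; apply/eqP; have := h k; rewrite inE.
rewrite card_family foldrE big_map big_enum /=.
by apply: eq_bigr => k _; apply: eq_card => w; rewrite !inE.
Qed.


Lemma prod_ind_forall (X Y : DC) k :
  \prod_(l < n | l != k) ((X l == Y l)%:R : R) =
  ([forall l, (l != k) ==> (X l == Y l)])%:R.
Proof.
case: forallP => h.
  by apply: big1 => l hl; rewrite (eqP (implyP (h l) hl)) eqxx.
case: (pickP (fun l => (l != k) && (X l != Y l))) => [l /andP [hl hne]|hnone].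
  by rewrite (bigD1 l) //= (negbTE hne) mul0r.
case: h => l; apply/implyP => hl; have := hnone l; rewrite hl /=.
by move/negbFE.
Qed.

Lemma wiso_prod :
  wiso (cartprod (fun k => quotient (A k) (cell k))) (quotient AG pi).
Proof.
exists id; split; first by exists id.
move=> X Y /=.
have [x0 hx0] := proj1 equit_prod X.
have hx0k : forall l, cell l (x0 l) = X l by move=> l; rewrite -pi_k hx0.
rewrite (quot_formula equit_prod Y hx0) /deg degG /cartprod mulr_sumr mulr_suml.
apply: eq_bigr => k _.
rewrite (quot_formula (heq k) (Y k) (hx0k k)) prod_ind_forall /deg -/(degk k _ _).
have -> : [forall l, (l != k) ==> (cell l (x0 l) == Y l)] =
          [forall l, (l != k) ==> (X l == Y l)].
  by apply: eq_forallb => l; rewrite hx0k.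
case: forallP => h /=; last by rewrite !(mulr0, mul0r).
rewrite mul1r.
have hc : (#|[set z : DT | pi z == X]| * #|[set w | cell k w == Y k]| =
           #|[set z : DT | pi z == Y]| * #|[set w | cell k w == X k]|)%N.
  rewrite !card_pi (bigD1 k) //= [in RHS](bigD1 k) //= mulnAC [in RHS]mulnAC.
  congr (_ * _)%N; first by rewrite mulnC.
  by apply: eq_bigr => l hl; rewrite (eqP (implyP (h l) hl)).
have hs : sq R pi X * sq R (cell k) (Y k) = sq R pi Y * sq R (cell k) (X k).
  by rewrite /sq -!sqrtrM ?ler0n // -!natrM hc.
rewrite -(sq_sqr R pi X) -(sq_sqr R (cell k) (X k)).
have n1 := sq_neq0 equit_prod X. have n2 := sq_neq0 equit_prod Y.
have n3 := sq_neq0 (heq k) (X k). have n4 := sq_neq0 (heq k) (Y k).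
transitivity ((sq R pi X * sq R (cell k) (Y k)) * degk k (x0 k) (Y k) /
   (sq R pi Y * sq R (cell k) (Y k))).
  by field; rewrite n1 n2 n4.
rewrite hs; field; by rewrite n2 n3 n4.
Qed.

End PartProd.

From HB Require Import structures.
From mathcomp Require Import all_boot all_order all_algebra.
From mathcomp Require Import all_classical all_reals.
From mathcomp Require Import topology normedtype sequences.
From mathcomp Require Import complex.
Import Order.TTheory GRing.Theory Num.Theory.
Local Open Scope ring_scope.

Theorem corollary1 (R : realType) (n : nat) (hn : (0 < n)%N)
  (V C : 'I_n -> finType) (e : forall k, rel (V k))
  (hsimple : forall k, simple_graph (e k))
  (a b : forall k, V k) (t : R) (ht : 0 < t)
  (hpst : forall k, pst (adjmx R (e k)) (a k) (b k) t)
  (hneq : exists k, a k != b k)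
  (cell : forall k, V k -> C k)
  (hequit : forall k, equitable (adjmx R (e k)) (cell k))
  (hsinga : forall k x, cell k x = cell k (a k) -> x = a k)
  (hsingb : forall k x, cell k x = cell k (b k) -> x = b k) :
  let AG := cartprod (fun k => adjmx R (e k)) in
  let pi := prodcell cell in
  let av : {dffun forall k : 'I_n, V k} := finfun a in
  let bv : {dffun forall k : 'I_n, V k} := finfun b in
  equitable AG pi /\
  wiso (cartprod (fun k => quotient (adjmx R (e k)) (cell k)))
       (quotient AG pi) /\
  pst (quotient AG pi) (pi av) (pi bv) t.
Proof.
move=> AG pi av bv.
have hsym : forall k x y, adjmx R (e k) x y = adjmx R (e k) y x.
  by move=> k x y; rewrite /adjmx (proj1 (hsimple k) x y).
have heqG : equitable AG pi := equit_prod R n V C _ cell hequit.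
split; first exact: heqG.
split; first exact: (wiso_prod R n V C _ cell hequit).
have hs : forall (c : forall k, V k) (hc : forall k x, cell k x = cell k (c k) -> x = c k),
    forall z, pi z = pi (finfun c) -> z = finfun c.
  move=> c hc z hz; apply/ffunP => k; rewrite ffunE; apply: hc.
  by move/ffunP: hz => /(_ k); rewrite /pi /prodcell !ffunE.
rewrite /pst (exp_entry_single heqG t (hs a hsinga) (hs b hsingb)).
rewrite (exp_prod R n V _ hsym a) normr_prod big1 // => k _.
by rewrite ffunE; exact: hpst.
Qed.
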